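(* There exists a countable family of closed intervals $(B_\omega)_{\omega\in\Sigma_*}$ contained in $[0,1]$, indexed by the set $\Sigma_*=\bigcup_{n\ge0}\{0,1\}^n$ of finite binary words, such that $\lambda(\limsup_\omega B_\omega)>0$, but for every $a>1$, if $E_\omega$ denotes the interval with the same center as $B_\omega$ and length $|B_\omega|^a$, then $\limsup_\omega E_\omega=\emptyset$. (Here the limsup over the countable family is the set of points lying in infinitely many members.)
   Context: $\lambda$ is Lebesgue measure on $\mathbb R$ and $|B|$ denotes the length of an interval $B$. *)

(* Defs.v *)
From Stdlib Require Import Reals List.
Open Scope R_scope.

Definition word := list bool.

Definition cinterval (l r : R) (x : R) : Prop := l <= x /\ x <= r.

Definition inf_many (P : word -> Prop) : Prop :=
  forall L : list word, exists w, P w /\ ~ In w L.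

Definition limsup_w (A : word -> R -> Prop) (x : R) : Prop :=
  inf_many (fun w => A w x).

Definition leb_null (S : R -> Prop) : Prop :=
  forall eps : R, 0 < eps ->
    exists a b : nat -> R,
      (forall n, a n <= b n) /\
      (forall x, S x -> exists n, a n < x < b n) /\
      (forall N, sum_f_R0 (fun n => b n - a n) N <= eps).

Definition leb_pos (S : R -> Prop) : Prop := ~ leb_null S.

(* x^a for x >= 0 and a > 0, with the convention 0^a = 0
   (Stdlib's Rpower is only meaningful for positive bases). *)
Definition rpow (x a : R) : R := if Rle_dec x 0 then 0 else Rpower x a.

Definition shrink (a l r : R) : R -> Prop :=
  cinterval ((l + r) / 2 - rpow (r - l) a / 2) ((l + r) / 2 + rpow (r - l) a / 2).

(* Main.v *)
Require Import Defs.
From Stdlib Require Import Reals List Lia Lra Psatz Arith ZArith Classical.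
Open Scope R_scope.
Import ListNotations.

Definition pp (n : nat) : R := (INR n + 2) / (2 * (INR n + 1)).
Definition L (n : nat) : R := pp n / 2 ^ n.
Definition glen (n : nat) : R := L n - 2 * L (S n).

Lemma pow2_pos n : 0 < 2 ^ n.
Proof. apply pow_lt; lra. Qed.

Lemma pp_bounds n : / 2 <= pp n <= 1.
Proof.
  unfold pp. pose proof (pos_INR n).
  split.
  - apply (Rmult_le_reg_r (2 * (INR n + 1))); [lra|].
    field_simplify; lra.
  - apply (Rmult_le_reg_r (2 * (INR n + 1))); [lra|].
    field_simplify; lra.
Qed.

Lemma L_pos n : 0 < L n.
Proof. unfold L. pose proof (pp_bounds n). pose proof (pow2_pos n).
  apply Rdiv_lt_0_compat; lra. Qed.

Lemma glen_eq n : glen n = / (2 * (INR n + 1) * (INR n + 2) * 2 ^ n).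
Proof.
  unfold glen, L, pp. rewrite S_INR. simpl (2 ^ S n).
  pose proof (pos_INR n). pose proof (pow2_pos n).
  field. repeat split; lra.
Qed.

Lemma glen_pos n : 0 < glen n.
Proof. rewrite glen_eq. pose proof (pos_INR n). pose proof (pow2_pos n).
  apply Rinv_0_lt_compat. repeat apply Rmult_lt_0_compat; lra. Qed.

Lemma L0 : L 0 = 1.
Proof. unfold L, pp. simpl. field. Qed.

Lemma twoL n : 2 ^ n * L n = pp n.
Proof. unfold L. pose proof (pow2_pos n). field. lra. Qed.

Lemma L_le n : L n <= / 2 ^ n.
Proof. unfold L. pose proof (pp_bounds n). pose proof (pow2_pos n).
  unfold Rdiv. rewrite <- (Rmult_1_l (/ 2 ^ n)) at 2.
  apply Rmult_le_compat_r; [left; apply Rinv_0_lt_compat|]; lra. Qed.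

Lemma exp_big b : 0 < b -> exists N, forall n, (N <= n)%nat ->
  2 * (INR n + 1) * (INR n + 2) < exp (b * INR n).
Proof.
  intros Hb.
  destruct (archimed (324 / (b*b*b))) as [H1 _].
  assert (Hup : (0 <= up (324 / (b*b*b)))%Z).
  { apply le_IZR. assert (0 < 324 / (b*b*b)).
    { apply Rdiv_lt_0_compat; [lra|]. repeat apply Rmult_lt_0_compat; lra. }
    simpl. lra. }
  exists (S (Z.to_nat (up (324 / (b*b*b))))).
  intros n Hn.
  assert (HN : 324 / (b*b*b) < INR n).
  { apply Rlt_le_trans with (IZR (up (324/(b*b*b)))); [exact H1|].
    rewrite <- (Z2Nat.id _ Hup), <- INR_IZR_INZ. apply le_INR. lia. }
  assert (Hn1 : 1 <= INR n).
  { replace 1 with (INR 1) by reflexivity. apply le_INR. lia. }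
  assert (Hb3 : 0 < b*b*b) by (repeat apply Rmult_lt_0_compat; lra).
  assert (Hk : 324 < b*b*b * INR n).
  { apply (Rmult_lt_compat_l (b*b*b)) in HN; [|lra].
    unfold Rdiv in HN. rewrite <- Rmult_assoc, (Rmult_comm (b*b*b) 324),
      Rmult_assoc, Rinv_r in HN; lra. }
  set (y := b * INR n / 3).
  assert (Hy : 0 < y) by (unfold y; apply Rdiv_lt_0_compat; [apply Rmult_lt_0_compat|]; lra).
  assert (He : exp (b * INR n) = exp y * exp y * exp y).
  { rewrite <- !exp_plus. f_equal. unfold y. field. }
  assert (Hy1 : y < exp y).
  { pose proof (exp_ineq1 y). lra. }
  rewrite He.
  assert (y*y*y < exp y * exp y * exp y).
  { assert (y * y < exp y * exp y) by (apply Rmult_le_0_lt_compat; lra).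
    apply Rmult_le_0_lt_compat; try lra. nra. }
  assert (2 * (INR n + 1) * (INR n + 2) <= y * y * y); [|lra].
  unfold y.
  replace (b * INR n / 3 * (b * INR n / 3) * (b * INR n / 3))
    with ((b*b*b * INR n) * (INR n * INR n) / 27) by field.
  assert (324 * (INR n * INR n) <= b * b * b * INR n * (INR n * INR n)).
  { apply Rmult_le_compat_r; nra. }
  nra.
Qed.

Lemma pow_est a : 1 < a -> exists N, forall n, (N <= n)%nat ->
  Rpower (L n) a < glen n.
Proof.
  intros Ha.
  assert (Hb : 0 < (a - 1) * ln 2).
  { apply Rmult_lt_0_compat; [lra|]. rewrite <- ln_1. apply ln_increasing; lra. }
  destruct (exp_big _ Hb) as [N HN]. exists N. intros n Hn.
  specialize (HN n Hn).
  replace a with (1 + (a - 1)) at 1 by ring.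
  rewrite Rpower_plus, Rpower_1 by apply L_pos.
  assert (Hr : Rpower (L n) (a - 1) <= / exp ((a-1) * ln 2 * INR n)).
  { apply Rle_trans with (Rpower (/ 2 ^ n) (a - 1)).
    - apply Rle_Rpower_l; [lra|]. split; [apply L_pos| apply L_le].
    - unfold Rpower. rewrite ln_Rinv by apply pow2_pos.
      rewrite ln_pow by lra. rewrite <- exp_Ropp. right. f_equal. ring. }
  rewrite glen_eq.
  set (E := exp ((a - 1) * ln 2 * INR n)) in *.
  assert (HE : 0 < E) by apply exp_pos.
  pose proof (pos_INR n). pose proof (pow2_pos n).
  unfold L. pose proof (pp_bounds n).
  apply Rle_lt_trans with (pp n / 2 ^ n * / E).
  { apply Rmult_le_compat_l; [|exact Hr]. apply Rlt_le, Rdiv_lt_0_compat; lra. }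
  set (D := 2 * (INR n + 1) * (INR n + 2)) in *.
  assert (0 < D) by (unfold D; nra).
  replace (/ (D * 2 ^ n)) with (/ D * / 2 ^ n) by (field; lra).
  unfold Rdiv.
  replace (pp n * / 2 ^ n * / E) with ((pp n * / E) * / 2 ^ n) by ring.
  apply Rmult_lt_compat_r; [apply Rinv_0_lt_compat; lra|].
  apply Rle_lt_trans with (/ E).
  { rewrite <- (Rmult_1_l (/ E)) at 2. apply Rmult_le_compat_r; [apply Rlt_le, Rinv_0_lt_compat|]; lra. }
  apply Rinv_lt_contravar; nra.
Qed.

Fixpoint LO (n k : nat) : R :=
  match n with
  | O => 0
  | S m => LO m (Nat.div2 k) + (if Nat.odd k then L m - L (S m) else 0)
  end.
Definition HI n k := LO n k + L n.
Definition GL n k := LO n k + L (S n).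
Definition GH n k := LO n k + L n - L (S n).

Lemma glen_gap n : 2 * L (S n) < L n.
Proof. pose proof (glen_pos n). unfold glen in H. lra. Qed.

Lemma LO_S n k : LO (S n) k = LO n (Nat.div2 k) + (if Nat.odd k then L n - L (S n) else 0).
Proof. reflexivity. Qed.

Lemma LO_even n k : LO (S n) (2 * k) = LO n k.
Proof. rewrite LO_S, Nat.div2_double, Nat.odd_even. ring. Qed.
Lemma LO_odd n k : LO (S n) (2 * k + 1) = LO n k + (L n - L (S n)).
Proof. rewrite LO_S, Nat.div2_odd', Nat.odd_odd. ring. Qed.

Lemma nest n k : LO n (Nat.div2 k) <= LO (S n) k /\ HI (S n) k <= HI n (Nat.div2 k).
Proof.
  unfold HI. rewrite LO_S. pose proof (glen_gap n). pose proof (L_pos (S n)).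
  destruct (Nat.odd k); lra.
Qed.

Lemma in01 n k : 0 <= LO n k /\ HI n k <= 1.
Proof.
  revert k; induction n; intro k.
  - unfold HI; simpl; rewrite L0; lra.
  - destruct (nest n k). destruct (IHn (Nat.div2 k)). lra.
Qed.

Lemma div2_lt n k : (k < 2 ^ S n)%nat -> (Nat.div2 k < 2 ^ n)%nat.
Proof.
  intros H. rewrite (Nat.div2_odd k) in H. simpl in H.
  destruct (Nat.odd k); simpl in H; lia.
Qed.

Lemma sep1 n k : (S k < 2 ^ n)%nat -> HI n k < LO n (S k).
Proof.
  revert k; induction n; intros k Hk.
  - simpl in Hk. lia.
  - destruct (Nat.Even_or_Odd k) as [[j ->]|[j ->]].
    + replace (S (2 * j)) with (2 * j + 1)%nat by lia.
      unfold HI. rewrite LO_even, LO_odd. pose proof (glen_gap n). lra.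
    + replace (S (2 * j + 1)) with (2 * (S j))%nat by lia.
      unfold HI. rewrite LO_even, LO_odd.
      assert (S j < 2 ^ n)%nat by (simpl in Hk; lia).
      specialize (IHn j H). unfold HI in IHn. lra.
Qed.

Lemma sep n k k' : (k < k')%nat -> (k' < 2 ^ n)%nat -> HI n k < LO n k'.
Proof.
  intros H1; induction H1; intros H2.
  - apply sep1; auto.
  - assert (HI n k < LO n m) by (apply IHle; lia).
    pose proof (sep1 n m H2). unfold HI in *. pose proof (L_pos n). lra.
Qed.

Lemma gap_child n k j x : (k < 2 ^ n)%nat -> (j < 2 ^ S n)%nat ->
  GL n k < x < GH n k -> LO (S n) j <= x <= HI (S n) j -> False.
Proof.
  intros Hk Hj Hg Hb.
  destruct (Nat.eq_dec (Nat.div2 j) k) as [E|E].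
  - unfold GL, GH, HI in *. rewrite LO_S in Hb. rewrite E in Hb.
    destruct (Nat.odd j); lra.
  - destruct (nest n j) as [N1 N2].
    pose proof (div2_lt n j Hj).
    unfold GL, GH in Hg. pose proof (L_pos (S n)).
    destruct (Nat.lt_total (Nat.div2 j) k) as [H5|[H5|H5]]; try lia.
    + pose proof (sep n _ _ H5 Hk). unfold HI in *. lra.
    + pose proof (sep n _ _ H5 H). unfold HI in *. lra.
Qed.

Lemma descend d n j : (j < 2 ^ (S n + d))%nat -> exists j0, (j0 < 2 ^ S n)%nat /\
  LO (S n) j0 <= LO (S n + d) j /\ HI (S n + d) j <= HI (S n) j0.
Proof.
  revert j; induction d; intros j Hj.
  - exists j. rewrite Nat.add_0_r in *. split; [auto|lra].
  - replace (S n + S d)%nat with (S (S n + d)) in * by lia.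
    destruct (IHd (Nat.div2 j) (div2_lt _ _ Hj)) as [j0 [H1 [H2 H3]]].
    exists j0. destruct (nest (S n + d) j). split; [auto|lra].
Qed.

Lemma gap_level n k m j x : (k < 2 ^ n)%nat -> (j < 2 ^ m)%nat ->
  GL n k < x < GH n k -> GL m j < x < GH m j -> n = m.
Proof.
  intros Hk Hj H1 H2.
  destruct (Nat.lt_total n m) as [H|[H|H]]; auto; exfalso.
  - destruct (descend (m - S n) n j) as [j0 [A [B C]]].
    { replace (S n + (m - S n))%nat with m by lia. auto. }
    replace (S n + (m - S n))%nat with m in * by lia.
    apply (gap_child n k j0 x Hk A H1).
    unfold GL, GH, HI in *. pose proof (L_pos (S m)). lra.
  - destruct (descend (n - S m) m k) as [j0 [A [B C]]].
    { replace (S m + (n - S m))%nat with n by lia. auto. }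
    replace (S m + (n - S m))%nat with n in * by lia.
    apply (gap_child m j j0 x Hj A H2).
    unfold GL, GH, HI in *. pose proof (L_pos (S n)). lra.
Qed.

Definition val (w : word) : nat :=
  fold_left (fun acc (b : bool) => (2 * acc + (if b then 1 else 0))%nat) w 0%nat.
Definition lo (w : word) : R := LO (length w) (val w).
Definition hi (w : word) : R := HI (length w) (val w).

Lemma val_app w b : val (w ++ [b]) = (2 * val w + (if b then 1 else 0))%nat.
Proof. unfold val. rewrite fold_left_app. reflexivity. Qed.

Lemma val_lt w : (val w < 2 ^ length w)%nat.
Proof.
  induction w using rev_ind.
  - unfold val; simpl; lia.
  - rewrite val_app, length_app. simpl length. rewrite Nat.add_1_r. simpl.
    destruct x; simpl; lia.
Qed.

Lemma step_cover x : 0 <= x <= 1 ->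
  (forall n k, (k < 2 ^ n)%nat -> ~ (GL n k < x < GH n k)) ->
  forall n, exists w, length w = n /\ lo w <= x <= hi w.
Proof.
  intros H01 Hg n. induction n.
  - exists []. unfold lo, hi, HI. simpl length. rewrite L0. split; [reflexivity|]. simpl LO. split; [apply H01|]. apply Rle_trans with 1; [apply H01|]. right; ring.
  - destruct IHn as [w [Hl Hx]].
    pose proof (Hg _ _ (val_lt w)).
    unfold lo, hi, HI, GL, GH in *.
    destruct (Rle_dec x (LO (length w) (val w) + L (S (length w)))).
    + exists (w ++ [false]). rewrite length_app, val_app. simpl length.
      rewrite Nat.add_1_r, Hl, Nat.add_0_r, LO_even, <- Hl.
      split; [auto|]. lra.
    + exists (w ++ [true]). rewrite length_app, val_app. simpl length.
      rewrite Nat.add_1_r, Hl, LO_odd, <- Hl.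
      split; [auto|]. pose proof (glen_gap (length w)).
      assert (~ (LO (length w) (val w) + L (S (length w)) < x <
        LO (length w) (val w) + L (length w) - L (S (length w)))) by (subst; auto).
      lra.
Qed.

Lemma list_len_bound (Lw : list word) : exists n, forall w, In w Lw -> (length w < n)%nat.
Proof.
  induction Lw as [|w0 Lw [n Hn]].
  - exists 0%nat. intros w [].
  - exists (S (Nat.max n (length w0))). intros w [<-|H]; [lia|]. specialize (Hn w H); lia.
Qed.

Lemma K_limsup x : (forall n, exists w, length w = n /\ lo w <= x <= hi w) ->
  limsup_w (fun w => cinterval (lo w) (hi w)) x.
Proof.
  intros H Lw. destruct (list_len_bound Lw) as [n Hn].
  destruct (H n) as [w [Hl Hx]]. exists w. split; [exact Hx|].
  intro Hin. specialize (Hn w Hin). lia.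
Qed.

Fixpoint words_len (n : nat) : list word :=
  match n with
  | O => [[]]
  | S m => map (cons false) (words_len m) ++ map (cons true) (words_len m)
  end.

Lemma words_len_in w : In w (words_len (length w)).
Proof.
  induction w; simpl; [auto|]. apply in_or_app.
  destruct a; [right|left]; apply in_map; auto.
Qed.

Definition words_below (M : nat) : list word := flat_map words_len (seq 0 M).

Lemma words_below_in w M : (length w < M)%nat -> In w (words_below M).
Proof.
  intros H. unfold words_below. apply in_flat_map. exists (length w).
  split; [apply in_seq; lia| apply words_len_in].
Qed.

Lemma shrink_gap a w x : 1 < a -> Rpower (L (length w)) a < glen (length w) ->
  shrink a (lo w) (hi w) x -> GL (length w) (val w) < x < GH (length w) (val w).
Proof.
  intros Ha Hp Hs. unfold shrink, cinterval, lo, hi, HI, GL, GH, rpow in *.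
  replace (LO (length w) (val w) + L (length w) - LO (length w) (val w))
    with (L (length w)) in Hs by ring.
  pose proof (L_pos (length w)).
  destruct (Rle_dec (L (length w)) 0); [lra|].
  unfold glen in Hp. lra.
Qed.

Lemma E_part a x : 1 < a -> ~ limsup_w (fun w => shrink a (lo w) (hi w)) x.
Proof.
  intros Ha Hl.
  destruct (pow_est a Ha) as [N HN].
  destruct (classic (exists w0, (N <= length w0)%nat /\ shrink a (lo w0) (hi w0) x))
    as [[w0 [Hw0 Hs0]]|Hno].
  - destruct (Hl (words_below (Nat.max N (S (length w0))))) as [w [Hs Hn]].
    apply Hn. apply words_below_in.
    destruct (Nat.lt_ge_cases (length w) N); [lia|].
    assert (length w = length w0); [|lia].
    apply (gap_level _ _ _ _ x (val_lt w) (val_lt w0)).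
    + apply shrink_gap with a; auto.
    + apply shrink_gap with a; auto.
  - destruct (Hl (words_below N)) as [w [Hs Hn]].
    apply Hn. apply words_below_in.
    destruct (Nat.lt_ge_cases (length w) N); [lia|].
    exfalso; apply Hno; eauto.
Qed.

Fixpoint sumL (l : list (R*R)) : R :=
  match l with [] => 0 | p :: l' => (snd p - fst p) + sumL l' end.

Lemma sumL_app l1 l2 : sumL (l1 ++ l2) = sumL l1 + sumL l2.
Proof. induction l1; simpl; [ring|rewrite IHl1; ring]. Qed.

Lemma sumL_nonneg l : (forall p, In p l -> fst p <= snd p) -> 0 <= sumL l.
Proof. induction l; simpl; intros H; [lra|].
  pose proof (H a (or_introl eq_refl)). assert (0 <= sumL l) by auto. lra. Qed.

Lemma cover_list : forall n (l : list (R*R)) c d, length l = n ->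
  (forall p, In p l -> fst p <= snd p) -> c <= d ->
  (forall x, c <= x <= d -> exists p, In p l /\ fst p < x < snd p) ->
  d - c < sumL l.
Proof.
  induction n as [n IH] using lt_wf_ind.
  intros l c d Hn Hle Hcd Hcov.
  destruct (Hcov d (conj Hcd (Rle_refl d))) as [[a b] [Hin [Ha Hb]]].
  simpl in Ha, Hb.
  destruct (in_split _ _ Hin) as [l1 [l2 ->]].
  rewrite sumL_app. simpl.
  assert (Hr : forall p, In p (l1 ++ l2) -> fst p <= snd p).
  { intros p Hp. apply Hle. apply in_app_or in Hp. apply in_or_app.
    destruct Hp; [left|right; right]; auto. }
  destruct (Rlt_le_dec a c) as [Hac|Hac].
  - pose proof (sumL_nonneg _ Hr). rewrite sumL_app in H. lra.
  - assert (a - c < sumL (l1 ++ l2)).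
    { apply (IH (length (l1 ++ l2))); auto.
      - subst n. rewrite !length_app. simpl. lia.
      - intros x Hx. destruct (Hcov x ltac:(lra)) as [q [Hq Hq2]].
        exists q. split; auto. apply in_app_or in Hq. apply in_or_app.
        destruct Hq as [Hq|[Hq|Hq]]; auto.
        subst q. simpl in Hq2. lra. }
    rewrite sumL_app in H. lra.
Qed.

Lemma compact01 (a b : nat -> R) :
  (forall x, 0 <= x <= 1 -> exists n, a n < x < b n) ->
  exists N, forall x, 0 <= x <= 1 -> exists n, (n <= N)%nat /\ a n < x < b n.
Proof.
  intros Hcov.
  set (S := fun t => 0 <= t <= 1 /\ exists N, forall x, 0 <= x <= t ->
    exists n, (n <= N)%nat /\ a n < x < b n).
  assert (HS0 : S 0).
  { split; [lra|]. destruct (Hcov 0 ltac:(lra)) as [n0 Hn0].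
    exists n0. intros x Hx. exists n0. split; [lia|].
    replace x with 0 by lra. auto. }
  assert (Hb : bound S) by (exists 1; intros t [Ht _]; lra).
  destruct (completeness S Hb (ex_intro _ 0 HS0)) as [s [Hub Hlub]].
  assert (Hs0 : 0 <= s) by (apply Hub; auto).
  assert (Hs1 : s <= 1) by (apply Hlub; intros t [Ht _]; lra).
  destruct (Hcov s ltac:(lra)) as [n0 [Ha0 Hb0]].
  assert (Ht : exists t, S t /\ a n0 < t).
  { apply NNPP. intro Hne.
    assert (s <= Rmax (a n0) 0).
    { apply Hlub. intros t Ht. destruct (Rle_dec t (a n0)).
      - apply Rle_trans with (a n0); auto. apply Rmax_l.
      - exfalso. apply Hne. exists t. split; auto. lra. }
    destruct (Rle_dec (a n0) 0).
    - rewrite Rmax_right in H by auto.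
      apply Hne. exists 0. split; auto. lra.
    - rewrite Rmax_left in H by lra. lra. }
  destruct Ht as [t [[Ht01 [N HN]] Hat]].
  set (t' := Rmin 1 ((s + b n0) / 2)).
  assert (HSt' : forall x, 0 <= x <= t' -> exists n, (n <= Nat.max N n0)%nat /\ a n < x < b n).
  { intros x Hx. destruct (Rle_dec x t).
    - destruct (HN x ltac:(lra)) as [n [Hn1 Hn2]]. exists n. split; [lia|auto].
    - exists n0. split; [lia|]. assert (t' < b n0).
      { unfold t'. apply Rle_lt_trans with ((s + b n0) / 2); [apply Rmin_r|lra]. }
      lra. }
  assert (t' <= s).
  { apply Hub. split; [|exists (Nat.max N n0); auto].
    unfold t'. split; [|apply Rmin_l]. apply Rmin_glb; lra. }
  assert (Hs : s = 1).
  { destruct (Rle_dec 1 ((s + b n0) / 2)).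
    - unfold t' in H. rewrite Rmin_left in H by auto. lra.
    - unfold t' in H. rewrite Rmin_right in H by lra. lra. }
  exists (Nat.max N n0). intros x Hx. apply HSt'. split; [lra|].
  unfold t'. apply Rmin_glb; lra.
Qed.

Lemma sumL_seq (a b : nat -> R) N :
  sumL (map (fun n => (a n, b n)) (seq 0 (S N))) = sum_f_R0 (fun n => b n - a n) N.
Proof.
  induction N.
  - simpl. ring.
  - rewrite seq_S, map_app, sumL_app, IHN. simpl. ring.
Qed.

Lemma core (a b : nat -> R) : (forall n, a n <= b n) ->
  (forall x, 0 <= x <= 1 -> exists n, a n < x < b n) ->
  exists N, 1 < sum_f_R0 (fun n => b n - a n) N.
Proof.
  intros Hab Hcov. destruct (compact01 a b Hcov) as [N HN]. exists N.
  rewrite <- sumL_seq.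
  replace 1 with (1 - 0) by ring.
  apply (cover_list _ _ _ _ eq_refl).
  - intros p Hp. apply in_map_iff in Hp. destruct Hp as [n [<- _]]. simpl; auto.
  - lra.
  - intros x Hx. destruct (HN x Hx) as [n [Hn1 Hn2]]. exists (a n, b n).
    split; auto. apply in_map_iff. exists n. split; auto. apply in_seq. lia.
Qed.

Fixpoint sumN (f : nat -> R) (n : nat) : R :=
  match n with O => 0 | S m => sumN f m + f m end.

Lemma sum_f_sumN f N : sum_f_R0 f N = sumN f (S N).
Proof. induction N; simpl; [ring|]. rewrite IHN. simpl. ring. Qed.

Lemma sumN_add f p q : sumN f (p + q) = sumN f p + sumN (fun i => f (p + i)%nat) q.
Proof. induction q; simpl; [rewrite Nat.add_0_r; ring|].
  rewrite Nat.add_succ_r. simpl. rewrite IHq. ring. Qed.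

Lemma sumN_ext f g n : (forall i, (i < n)%nat -> f i = g i) -> sumN f n = sumN g n.
Proof. induction n; intros H; simpl; auto. rewrite IHn; [rewrite H by lia; auto|intros; apply H; lia]. Qed.

Lemma sumN_const c n : sumN (fun _ => c) n = INR n * c.
Proof. induction n; simpl sumN; [simpl; ring|]. rewrite IHn, S_INR. ring. Qed.

Lemma sumN_mono f m n : (forall i, 0 <= f i) -> (m <= n)%nat -> sumN f m <= sumN f n.
Proof. intros H Hmn. induction Hmn; [lra|]. simpl. specialize (H m0). lra. Qed.

Definition lev (m : nat) : nat := Nat.log2 (S m).
Definition gk (m : nat) : nat := (S m - 2 ^ lev m)%nat.
Definition G (m : nat) : R := glen (lev m).

Lemma lev_eq n k : (k < 2 ^ n)%nat -> lev (2 ^ n - 1 + k) = n /\ gk (2 ^ n - 1 + k) = k.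
Proof.
  intros Hk. assert (H1 : (1 <= 2 ^ n)%nat) by (apply Nat.neq_0_lt_0, Nat.pow_nonzero; lia).
  assert (E : lev (2 ^ n - 1 + k) = n).
  { unfold lev. apply Nat.log2_unique; [lia|]. simpl. lia. }
  split; auto. unfold gk. rewrite E. lia.
Qed.

Lemma block n : sumN G (2 ^ n - 1) = 1 - pp n.
Proof.
  induction n.
  - simpl. unfold pp. simpl. field.
  - assert (H1 : (1 <= 2 ^ n)%nat) by (apply Nat.neq_0_lt_0, Nat.pow_nonzero; lia).
    replace (2 ^ S n - 1)%nat with ((2 ^ n - 1) + 2 ^ n)%nat by (simpl; lia).
    rewrite sumN_add, IHn.
    rewrite (sumN_ext _ (fun _ => glen n)).
    + rewrite sumN_const, pow_INR. replace (INR 2) with 2 by (simpl; ring).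
      rewrite <- (twoL n), <- (twoL (S n)). unfold glen. simpl. ring.
    + intros i Hi. unfold G. destruct (lev_eq n i Hi) as [-> _]. auto.
Qed.

Lemma G_sum M : sum_f_R0 G M <= / 2.
Proof.
  rewrite sum_f_sumN.
  apply Rle_trans with (sumN G (2 ^ S M - 1)).
  - apply sumN_mono. { intro i; unfold G; left; apply glen_pos. }
    pose proof (Nat.pow_gt_lin_r 2 (S M) ltac:(lia)). lia.
  - rewrite block. pose proof (pp_bounds (S M)). lra.
Qed.

Lemma sum_f_mono f m n : (forall i, 0 <= f i) -> (m <= n)%nat -> sum_f_R0 f m <= sum_f_R0 f n.
Proof. intros H Hmn. rewrite !sum_f_sumN. apply sumN_mono; auto. lia. Qed.

Section Inter.
Variables a b : nat -> R.
Definition ci (i : nat) : R :=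
  if Nat.even i then a (Nat.div2 i) else GL (lev (Nat.div2 i)) (gk (Nat.div2 i)).
Definition di (i : nat) : R :=
  if Nat.even i then b (Nat.div2 i) else GH (lev (Nat.div2 i)) (gk (Nat.div2 i)).

Lemma h_even i : di (2 * i) - ci (2 * i) = b i - a i.
Proof. unfold di, ci. rewrite Nat.even_even, Nat.div2_double. auto. Qed.
Lemma h_odd i : di (2 * i + 1) - ci (2 * i + 1) = G i.
Proof. unfold di, ci. rewrite Nat.even_odd, Nat.div2_odd'. unfold GH, GL, G, glen. ring. Qed.

Lemma inter_sum M : sum_f_R0 (fun i => di i - ci i) (2 * M + 1) =
  sum_f_R0 (fun n => b n - a n) M + sum_f_R0 G M.
Proof.
  induction M.
  - simpl. pose proof (h_even 0). pose proof (h_odd 0). simpl in *. lra.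
  - replace (2 * S M + 1)%nat with (S (S (2 * M + 1))) by lia.
    change (sum_f_R0 (fun i => di i - ci i) (S (S (2 * M + 1)))) with
      (sum_f_R0 (fun i => di i - ci i) (2 * M + 1) + (di (S (2 * M + 1)) - ci (S (2 * M + 1)))
        + (di (S (S (2 * M + 1))) - ci (S (S (2 * M + 1))))).
    rewrite IHM.
    replace (S (2 * M + 1)) with (2 * S M)%nat by lia.
    replace (S (2 * S M)) with (2 * S M + 1)%nat by lia.
    rewrite h_even, h_odd. simpl. ring.
Qed.
End Inter.

Theorem mainTheorem6 :
  exists lo hi : word -> R,
    (forall w, 0 <= lo w /\ lo w <= hi w /\ hi w <= 1) /\
    leb_pos (limsup_w (fun w => cinterval (lo w) (hi w))) /\
    (forall a : R, 1 < a ->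
       forall x : R, ~ limsup_w (fun w => shrink a (lo w) (hi w)) x).
Proof.
  exists lo, hi. split; [|split].
  - intro w. unfold lo, hi. destruct (in01 (length w) (val w)).
    unfold HI in *. pose proof (L_pos (length w)). lra.
  - intros Hnull. destruct (Hnull (/ 4) ltac:(lra)) as [a [b [Hab [Hcov Hsum]]]].
    destruct (core (ci a) (di b)) as [N HN].
    + intro i. unfold ci, di. destruct (Nat.even i); auto.
      unfold GL, GH. pose proof (glen_gap (lev (Nat.div2 i))). lra.
    + intros x Hx.
      destruct (classic (exists n k, (k < 2 ^ n)%nat /\ GL n k < x < GH n k))
        as [[n [k [Hk Hg]]]|Hng].
      * exists (2 * (2 ^ n - 1 + k) + 1)%nat. unfold ci, di.
        rewrite Nat.even_odd, Nat.div2_odd'. destruct (lev_eq n k Hk) as [-> ->]. auto.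
      * assert (Hlim : limsup_w (fun w => cinterval (lo w) (hi w)) x).
        { apply K_limsup. apply step_cover; auto.
          intros n k Hk Hg. apply Hng. eauto. }
        destruct (Hcov x Hlim) as [n Hn]. exists (2 * n)%nat.
        unfold ci, di. rewrite Nat.even_even, Nat.div2_double. auto.
    + assert (Hh : forall i, 0 <= di b i - ci a i).
      { intro i. unfold ci, di. destruct (Nat.even i); [specialize (Hab (Nat.div2 i)); lra|].
        unfold GL, GH. pose proof (glen_gap (lev (Nat.div2 i))). lra. }
      pose proof (sum_f_mono _ N (2 * N + 1) Hh ltac:(lia)).
      rewrite inter_sum in H. pose proof (Hsum N). pose proof (G_sum N). lra.
  - intros a Ha x. apply E_part; auto.
Qed.
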